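(* Let $q\in\,]0,1[$, $\omega\ge0$, let $I$ be an interval containing $\omega_0:=\omega/(1-q)$, $a,b\in I$ with $a<b$, $\alpha,\beta\in\mathbb{R}$, and $L:I\times\mathbb{R}\times\mathbb{R}\to\mathbb{R}$. Let $\eta$ be an admissible variation and $y$ an admissible function, and set $$g(t,\epsilon):=L\bigl(t,\,y(\sigma(t))+\epsilon\eta(\sigma(t)),\,\tilde D_{q,\omega}[y](t)+\epsilon\tilde D_{q,\omega}[\eta](t)\bigr).$$ Assume that (1) $g(t,\cdot)$ is differentiable at $0$ uniformly in $[a,b]_{q,\omega}$; (2) $\mathcal{L}_\xi(y+\epsilon\eta):=\int_{\omega_0}^{\xi}g(t,\epsilon)\,\tilde d_{q,\omega}t$, $\xi\in\{a,b\}$, exist for $\epsilon$ near $0$; (3) $\int_{\omega_0}^a\partial_2 g(t,0)\,\tilde d_{q,\omega}t$ and $\int_{\omega_0}^b\partial_2 g(t,0)\,\tilde d_{q,\omega}t$ exist. Then $\phi(\epsilon):=\mathcal{L}(y+\epsilon\eta)$ is differentiable at $0$ and $$\phi'(0)=\int_a^b\Bigl[\partial_2L\bigl(t,y(\sigma(t)),\tilde D_{q,\omega}[y](t)\bigr)\eta(\sigma(t))+\partial_3L\bigl(t,y(\sigma(t)),\tilde D_{q,\omega}[y](t)\bigr)\tilde D_{q,\omega}[\eta](t)\Bigr]\tilde d_{q,\omega}t.$$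
   Context: $\sigma(t):=qt+\omega$, $\sigma^{-1}(t):=q^{-1}(t-\omega)$, $\sigma^k$ the $k$-fold composition. Hahn symmetric derivative: for $t\neq\omega_0$, $\tilde D_{q,\omega}[f](t):=\frac{f(\sigma(t))-f(\sigma^{-1}(t))}{\sigma(t)-\sigma^{-1}(t)}$; $\tilde D_{q,\omega}[f](\omega_0):=f'(\omega_0)$ (classical). Hahn symmetric integral: $\int_{\omega_0}^x F\,\tilde d_{q,\omega}t:=(\sigma^{-1}(x)-\sigma(x))\sum_{n\ge0}q^{2n+1}F(\sigma^{2n+1}(x))$, $\int_a^bF\,\tilde d_{q,\omega}t:=\int_{\omega_0}^bF\,\tilde d_{q,\omega}t-\int_{\omega_0}^aF\,\tilde d_{q,\omega}t$. $[s]_{q,\omega}:=\{\sigma^{2n+1}(s):n\in\mathbb{N}_0\}\cup\{\omega_0\}$, $[a,b]_{q,\omega}:=[a]_{q,\omega}\cup[b]_{q,\omega}$. $\mathcal{Y}^1([a,b]_{q,\omega},\mathbb{R})$: functions $y:I\to\mathbb{R}$ such that $y$ and $\tilde D_{q,\omega}[y]$ are bounded on $[a,b]_{q,\omega}$ and continuous at $\omega_0$. $\mathcal{L}(y):=\int_a^bL(t,y(\sigma(t)),\tilde D_{q,\omega}[y](t))\,\tilde d_{q,\omega}t$. An admissible function is $y\in\mathcal{Y}^1([a,b]_{q,\omega},\mathbb{R})$ with $y(a)=\alpha$, $y(b)=\beta$; an admissible variation is $\eta\in\mathcal{Y}^1([a,b]_{q,\omega},\mathbb{R})$ with $\eta(a)=\eta(b)=0$.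 ''$g(t,\cdot)$ differentiable at $0$ uniformly in $[a,b]_{q,\omega}$'' means: for every $\varepsilon>0$ there is $\delta>0$ with $\left|\frac{g(t,\epsilon)-g(t,0)}{\epsilon}-\partial_2g(t,0)\right|<\varepsilon$ for all $0<|\epsilon|<\delta$ and all $t\in[a,b]_{q,\omega}$. $\partial_jL$ is the partial derivative of $L$ in its $j$-th argument. *)

(* Defs.v *)
From Stdlib Require Import Reals ClassicalEpsilon.
From Coquelicot Require Import Coquelicot.
Open Scope R_scope.

Definition sig (q w t : R) : R := q * t + w.
Definition siginv (q w t : R) : R := (t - w) / q.
Fixpoint sigk (q w : R) (k : nat) (t : R) : R :=
  match k with O => t | S k' => sig q w (sigk q w k' t) end.
Definition om0 (q w : R) : R := w / (1 - q).

Definition is_interval (I : R -> Prop) : Prop :=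
  forall x y z, I x -> I z -> x <= y <= z -> I y.

Definition derive_within (I : R -> Prop) (f : R -> R) (x l : R) : Prop :=
  forall eps, 0 < eps -> exists delta, 0 < delta /\
    forall h, I h -> h <> x -> Rabs (h - x) < delta ->
      Rabs ((f h - f x) / (h - x) - l) < eps.

Definition cont_within (I : R -> Prop) (f : R -> R) (x : R) : Prop :=
  forall eps, 0 < eps -> exists delta, 0 < delta /\
    forall h, I h -> Rabs (h - x) < delta -> Rabs (f h - f x) < eps.

(* Hahn symmetric derivative; at omega0 it is the classical derivative f'(omega0)
   (chosen by epsilon; meaningful when it exists, which Y1 requires) *)
Definition hahnD (I : R -> Prop) (q w : R) (f : R -> R) (t : R) : R :=
  if Req_EM_T t (om0 q w)
  then epsilon (inhabits 0) (fun l => derive_within I f t l)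
  else (f (sig q w t) - f (siginv q w t)) / (sig q w t - siginv q w t).

(* terms of the series defining the Hahn symmetric integral from omega0 to x *)
Definition hterms (q w : R) (F : R -> R) (x : R) (n : nat) : R :=
  q ^ (2 * n + 1) * F (sigk q w (2 * n + 1) x).

Definition hint0_exists (q w : R) (F : R -> R) (x : R) : Prop :=
  ex_series (hterms q w F x).

Definition hint0 (q w : R) (F : R -> R) (x : R) : R :=
  (siginv q w x - sig q w x) * Series (hterms q w F x).

Definition hint (q w : R) (F : R -> R) (a b : R) : R :=
  hint0 q w F b - hint0 q w F a.

Definition in_qw (q w s t : R) : Prop :=
  (exists n : nat, t = sigk q w (2 * n + 1) s) \/ t = om0 q w.
Definition in_qw_ab (q w a b t : R) : Prop := in_qw q w a t \/ in_qw q w b t.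

Definition bounded_on (P : R -> Prop) (f : R -> R) : Prop :=
  exists M, forall t, P t -> Rabs (f t) <= M.

Definition Y1 (I : R -> Prop) (q w a b : R) (y : R -> R) : Prop :=
  (exists l, derive_within I y (om0 q w) l) /\
  bounded_on (in_qw_ab q w a b) y /\
  bounded_on (in_qw_ab q w a b) (hahnD I q w y) /\
  cont_within I y (om0 q w) /\
  cont_within I (hahnD I q w y) (om0 q w).

Definition calL (I : R -> Prop) (q w : R) (L : R -> R -> R -> R) (y : R -> R)
  (a b : R) : R :=
  hint q w (fun t => L t (y (sig q w t)) (hahnD I q w y t)) a b.

Definition L_diff_at (L : R -> R -> R -> R) (t u v : R) : Prop :=
  forall eps, 0 < eps -> exists delta, 0 < delta /\
    forall h k, Rabs h < delta -> Rabs k < delta ->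
      Rabs (L t (u + h) (v + k) - L t u v
            - Derive (fun u' => L t u' v) u * h
            - Derive (fun v' => L t u v') v * k) <= eps * (Rabs h + Rabs k).

(* Main.v *)
Require Import Defs.
From Stdlib Require Import Reals ClassicalEpsilon Lra FunctionalExtensionality.
From Coquelicot Require Import Coquelicot.
Open Scope R_scope.

Lemma geom_ex (q : R) : 0 < q < 1 -> ex_series (fun n : nat => q ^ (2 * n + 1)).
Proof.
  intros Hq.
  apply ex_series_ext with (fun n => (q^2)^n * q).
  { intros n. rewrite pow_add, pow_mult, pow_1. reflexivity. }
  apply ex_series_scal_r. exists (/ (1 - q^2)). apply is_series_geom.
  rewrite Rabs_right. 2: { apply Rle_ge, pow_le; lra. }
  simpl. nra.
Qed.

Lemma dw_unique I f x l1 l2 :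
  (forall d, 0 < d -> exists h, I h /\ h <> x /\ Rabs (h - x) < d) ->
  derive_within I f x l1 -> derive_within I f x l2 -> l1 = l2.
Proof.
  intros Hd H1 H2.
  destruct (Req_dec l1 l2) as [E|N]; [exact E|exfalso].
  assert (Hp : 0 < Rabs (l1 - l2) / 2).
  { apply Rdiv_lt_0_compat; [apply Rabs_pos_lt; lra | lra]. }
  destruct (H1 _ Hp) as [d1 [Hd1 K1]].
  destruct (H2 _ Hp) as [d2 [Hd2 K2]].
  destruct (Hd (Rmin d1 d2)) as [h [Ih [hx hd]]]. apply Rmin_pos; lra.
  specialize (K1 h Ih hx). specialize (K2 h Ih hx).
  assert (A1 := K1 (Rlt_le_trans _ _ _ hd (Rmin_l _ _))).
  assert (A2 := K2 (Rlt_le_trans _ _ _ hd (Rmin_r _ _))).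
  set (Q := (f h - f x) / (h - x)) in *.
  assert (Rabs (l1 - l2) <= Rabs (Q - l1) + Rabs (Q - l2)).
  { replace (l1 - l2) with (-(Q - l1) + (Q - l2)) by ring.
    eapply Rle_trans; [apply Rabs_triang|]. rewrite Rabs_Ropp. lra. }
  lra.
Qed.

Lemma dw_lin I f g x l1 l2 e :
  derive_within I f x l1 -> derive_within I g x l2 ->
  derive_within I (fun t => f t + e * g t) x (l1 + e * l2).
Proof.
  intros H1 H2 eps Heps.
  set (e' := eps / (2 * (Rabs e + 1))).
  assert (He' : 0 < e').
  { unfold e'. apply Rdiv_lt_0_compat; [lra|]. pose proof (Rabs_pos e); lra. }
  destruct (H1 _ He') as [d1 [Hd1 K1]].
  destruct (H2 _ He') as [d2 [Hd2 K2]].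
  exists (Rmin d1 d2). split. apply Rmin_pos; lra.
  intros h Ih hx hd.
  assert (A1 := K1 h Ih hx (Rlt_le_trans _ _ _ hd (Rmin_l _ _))).
  assert (A2 := K2 h Ih hx (Rlt_le_trans _ _ _ hd (Rmin_r _ _))).
  assert (hx' : h - x <> 0) by lra.
  replace ((f h + e * g h - (f x + e * g x)) / (h - x) - (l1 + e * l2))
    with (((f h - f x) / (h - x) - l1) + e * ((g h - g x) / (h - x) - l2))
    by (field; exact hx').
  eapply Rle_lt_trans; [apply Rabs_triang|]. rewrite Rabs_mult.
  assert (Rabs e * Rabs ((g h - g x) / (h - x) - l2) <= Rabs e * e')
    by (apply Rmult_le_compat_l; [apply Rabs_pos|lra]).
  assert (e' + Rabs e * e' < eps).
  { unfold e'. pose proof (Rabs_pos e).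
    replace (eps / (2 * (Rabs e + 1)) + Rabs e * (eps / (2 * (Rabs e + 1))))
      with (eps / 2) by (field; lra). lra. }
  lra.
Qed.

Lemma dense_pt I q w a b :
  is_interval I -> I (om0 q w) -> I a -> I b -> a < b ->
  forall d, 0 < d -> exists h, I h /\ h <> om0 q w /\ Rabs (h - om0 q w) < d.
Proof.
  intros HI H0 Ha Hb Hab d Hd. set (o := om0 q w) in *.
  destruct (Rlt_le_dec o b) as [Hob|Hbo].
  - assert (0 < Rmin (d/2) (b - o)) by (apply Rmin_pos; lra).
    exists (o + Rmin (d/2) (b - o)). repeat split.
    + apply (HI o _ b); auto. pose proof (Rmin_r (d/2) (b-o)). lra.
    + lra.
    + replace (o + Rmin (d / 2) (b - o) - o) with (Rmin (d/2) (b-o)) by ring.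
      rewrite Rabs_right by lra. pose proof (Rmin_l (d/2) (b-o)). lra.
  - assert (0 < Rmin (d/2) (o - a)) by (apply Rmin_pos; lra).
    exists (o - Rmin (d/2) (o - a)). repeat split.
    + apply (HI a _ o); auto. pose proof (Rmin_r (d/2) (o-a)). lra.
    + lra.
    + replace (o - Rmin (d / 2) (o - a) - o) with (- Rmin (d/2) (o-a)) by ring.
      rewrite Rabs_Ropp, Rabs_right by lra. pose proof (Rmin_l (d/2) (o-a)). lra.
Qed.

Lemma hahnD_lin I q w a b y eta :
  is_interval I -> I (om0 q w) -> I a -> I b -> a < b ->
  (exists l, derive_within I y (om0 q w) l) ->
  (exists l, derive_within I eta (om0 q w) l) ->
  forall e t, hahnD I q w (fun s => y s + e * eta s) t = hahnD I q w y t + e * hahnD I q w eta t.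
Proof.
  intros HI H0 Ha Hb Hab Ey Ee e t. unfold hahnD.
  destruct (Req_EM_T t (om0 q w)) as [->|N].
  - set (ly := epsilon _ (fun l => derive_within I y (om0 q w) l)).
    set (le := epsilon _ (fun l => derive_within I eta (om0 q w) l)).
    assert (Dy : derive_within I y (om0 q w) ly) by (apply epsilon_spec; exact Ey).
    assert (De : derive_within I eta (om0 q w) le) by (apply epsilon_spec; exact Ee).
    assert (Ds := dw_lin _ _ _ _ _ _ e Dy De).
    apply (dw_unique I (fun s => y s + e * eta s) (om0 q w)).
    + exact (dense_pt I q w a b HI H0 Ha Hb Hab).
    + apply epsilon_spec. eexists; exact Ds.
    + exact Ds.
  - unfold Rdiv. ring.
Qed.

Lemma chain_L L t u v E F :
  L_diff_at L t u v ->
  is_derive (fun e => L t (u + e * E) (v + e * F)) 0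
    (Derive (fun u' => L t u' v) u * E + Derive (fun v' => L t u v') v * F).
Proof.
  intros HL. apply is_derive_Reals. intros eps Heps.
  set (M := Rabs E + Rabs F + 1).
  assert (HM : 0 < M) by (unfold M; pose proof (Rabs_pos E); pose proof (Rabs_pos F); lra).
  assert (He' : 0 < eps / (2 * M)) by (apply Rdiv_lt_0_compat; lra).
  destruct (HL _ He') as [d [Hd K]].
  assert (Hd' : 0 < d / M) by (apply Rdiv_lt_0_compat; lra).
  exists (mkposreal _ Hd'). simpl. intros h hn hd.
  assert (Hh : 0 < Rabs h) by (apply Rabs_pos_lt; exact hn).
  assert (B : forall Z, Rabs Z <= Rabs E + Rabs F + 1 -> Rabs (h * Z) < d).
  { intros Z HZ. rewrite Rabs_mult.
    apply Rle_lt_trans with (Rabs h * M).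
    apply Rmult_le_compat_l; [apply Rabs_pos | exact HZ].
    apply Rlt_le_trans with (d / M * M). apply Rmult_lt_compat_r; lra.
    right; field; lra. }
  pose proof (Rabs_pos E); pose proof (Rabs_pos F).
  assert (K1 := K (h * E) (h * F) (B E ltac:(lra)) (B F ltac:(lra))).
  set (Lu := Derive (fun u' => L t u' v) u) in *.
  set (Lv := Derive (fun v' => L t u v') v) in *.
  replace (L t (u + (0 + h) * E) (v + (0 + h) * F)) with (L t (u + h * E) (v + h * F))
    by (f_equal; ring).
  replace (L t (u + 0 * E) (v + 0 * F)) with (L t u v) by (f_equal; ring).
  replace ((L t (u + h * E) (v + h * F) - L t u v) / h - (Lu * E + Lv * F))
    with ((L t (u + h * E) (v + h * F) - L t u v - Lu * (h * E) - Lv * (h * F)) / h)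
    by (field; exact hn).
  rewrite Rabs_div by exact hn.
  apply (Rmult_lt_reg_r (Rabs h)); [exact Hh|].
  unfold Rdiv. rewrite Rmult_assoc, Rinv_l by lra. rewrite Rmult_1_r.
  eapply Rle_lt_trans; [exact K1|].
  rewrite !Rabs_mult.
  replace (eps / (2 * M) * (Rabs h * Rabs E + Rabs h * Rabs F))
    with (eps * Rabs h * ((Rabs E + Rabs F) / (2 * M))) by (field; lra).
  assert ((Rabs E + Rabs F) / (2 * M) < 1).
  { apply (Rmult_lt_reg_r (2 * M)); [lra|]. unfold Rdiv.
    rewrite Rmult_assoc, Rinv_l by lra. unfold M. lra. }
  assert (0 < eps * Rabs h) by (apply Rmult_lt_0_compat; lra).
  rewrite <- (Rmult_1_r (eps * Rabs h)) at 2.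
  apply Rmult_lt_compat_l; lra.
Qed.

Lemma series_der q w (P : R -> Prop) (G : R -> R -> R) (D : R -> R) x :
  0 < q < 1 ->
  (forall n, P (sigk q w (2 * n + 1) x)) ->
  (forall eps, 0 < eps -> exists delta, 0 < delta /\
     forall e t, 0 < Rabs e < delta -> P t ->
       Rabs ((G t e - G t 0) / e - D t) < eps) ->
  (exists delta, 0 < delta /\ forall e, Rabs e < delta -> ex_series (hterms q w (fun t => G t e) x)) ->
  ex_series (hterms q w D x) ->
  forall eps, 0 < eps -> exists delta, 0 < delta /\ forall e, 0 < Rabs e < delta ->
    Rabs ((Series (hterms q w (fun t => G t e) x) - Series (hterms q w (fun t => G t 0) x)) / e
          - Series (hterms q w D x)) < eps.
Proof.
  intros Hq HP HU [d2 [Hd2 HE]] HD eps Heps.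
  set (K := Series (fun n : nat => q ^ (2 * n + 1))).
  assert (HK : 0 <= K).
  { unfold K. apply Rle_trans with (Series (fun _ : nat => 0)).
    rewrite (Series_ext _ (fun n : nat => 0 * q ^ (2 * n + 1))) by (intros; ring).
    rewrite Series_scal_l; lra.
    apply Series_le. intros n; split; [lra| apply pow_le; lra]. apply geom_ex; auto. }
  assert (He' : 0 < eps / (K + 1)) by (apply Rdiv_lt_0_compat; lra).
  destruct (HU _ He') as [d1 [Hd1 K1]].
  exists (Rmin d1 d2). split. apply Rmin_pos; lra.
  intros e [He0 Hed].
  assert (Ee := HE e (Rlt_le_trans _ _ _ Hed (Rmin_r _ _))).
  assert (E0 : ex_series (hterms q w (fun t => G t 0) x)) by (apply HE; rewrite Rabs_R0; lra).
  assert (hn : e <> 0) by (intro Z; rewrite Z, Rabs_R0 in He0; lra).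
  rewrite <- Series_minus by assumption.
  unfold Rdiv. rewrite <- Series_scal_r.
  assert (Ex1 : ex_series (fun n => (hterms q w (fun t => G t e) x n - hterms q w (fun t => G t 0) x n) * / e)).
  { apply ex_series_scal_r. apply (ex_series_minus _ _ Ee E0). }
  rewrite <- Series_minus by assumption.
  set (a := fun n => _).
  assert (Ba : forall n, Rabs (a n) <= eps / (K + 1) * q ^ (2 * n + 1)).
  { intros n. unfold a, hterms.
    replace ((q ^ (2 * n + 1) * G (sigk q w (2 * n + 1) x) e -
              q ^ (2 * n + 1) * G (sigk q w (2 * n + 1) x) 0) * / e -
              q ^ (2 * n + 1) * D (sigk q w (2 * n + 1) x))
      with (q ^ (2 * n + 1) * ((G (sigk q w (2 * n + 1) x) e - G (sigk q w (2 * n + 1) x) 0) / e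
             - D (sigk q w (2 * n + 1) x))) by (unfold Rdiv; ring).
    rewrite Rabs_mult, Rabs_right by (apply Rle_ge, pow_le; lra).
    rewrite (Rmult_comm (eps / (K + 1))). apply Rmult_le_compat_l. apply pow_le; lra.
    left. apply K1; [split; [exact He0| exact (Rlt_le_trans _ _ _ Hed (Rmin_l _ _))] | apply HP]. }
  assert (Eb : ex_series (fun n => eps / (K + 1) * q ^ (2 * n + 1))).
  { apply ex_series_ext with (fun n => q ^ (2 * n + 1) * (eps / (K + 1))).
    intros n; apply Rmult_comm. apply ex_series_scal_r, geom_ex; auto. }
  assert (Ea : ex_series (fun n => Rabs (a n))).
  { refine (@ex_series_le R_AbsRing R_CompleteNormedModule _ _ _ Eb). intros n.
    change (Rabs (Rabs (a n)) <= eps / (K + 1) * q ^ (2 * n + 1)).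
    rewrite Rabs_Rabsolu. apply Ba. }
  eapply Rle_lt_trans. apply Series_Rabs, Ea.
  eapply Rle_lt_trans. apply Series_le. intros n; split; [apply Rabs_pos| apply Ba]. exact Eb.
  rewrite (Series_ext _ (fun n => q ^ (2 * n + 1) * (eps / (K + 1)))) by (intros; ring).
  rewrite Series_scal_r. fold K.
  replace (K * (eps / (K + 1))) with (eps * (K / (K + 1))) by (field; lra).
  assert (K / (K + 1) < 1).
  { apply (Rmult_lt_reg_r (K + 1)); [lra|]. unfold Rdiv.
    rewrite Rmult_assoc, Rinv_l by lra. lra. }
  rewrite <- (Rmult_1_r eps) at 2. apply Rmult_lt_compat_l; lra.
Qed.

Theorem lemma3p7 (q w : R) (I : R -> Prop) (a b alpha beta : R)
  (L : R -> R -> R -> R) (y eta : R -> R) :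
  0 < q < 1 -> 0 <= w -> is_interval I -> I (om0 q w) -> I a -> I b -> a < b ->
  Y1 I q w a b y -> y a = alpha -> y b = beta ->
  Y1 I q w a b eta -> eta a = 0 -> eta b = 0 ->
  (forall t, in_qw_ab q w a b t ->
     L_diff_at L t (y (sig q w t)) (hahnD I q w y t)) ->
  let g := fun t e => L t (y (sig q w t) + e * eta (sig q w t))
                          (hahnD I q w y t + e * hahnD I q w eta t) in
  (* (1) g(t,.) differentiable at 0 uniformly in [a,b]_{q,w} *)
  (forall eps, 0 < eps -> exists delta, 0 < delta /\
     forall e t, 0 < Rabs e < delta -> in_qw_ab q w a b t ->
       Rabs ((g t e - g t 0) / e - Derive (fun e' => g t e') 0) < eps) ->
  (* (2) L_xi(y + e eta), xi in {a,b}, exist for e near 0 *)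
  (exists delta, 0 < delta /\ forall e, Rabs e < delta ->
     hint0_exists q w (fun t => g t e) a /\ hint0_exists q w (fun t => g t e) b) ->
  (* (3) *)
  hint0_exists q w (fun t => Derive (fun e' => g t e') 0) a ->
  hint0_exists q w (fun t => Derive (fun e' => g t e') 0) b ->
  is_derive (fun e => calL I q w L (fun t => y t + e * eta t) a b) 0
    (hint q w (fun t =>
        Derive (fun u => L t u (hahnD I q w y t)) (y (sig q w t)) * eta (sig q w t)
      + Derive (fun v => L t (y (sig q w t)) v) (hahnD I q w y t) * hahnD I q w eta t)
      a b).
Proof.
  intros Hq Hw HI H0 Ha Hb Hab Yy _ _ Ye _ _ HL g HU [dE [HdE HE]] HDa HDb.
  set (D := fun t => Derive (fun e' => g t e') 0) in *.
  assert (Pa : forall n, in_qw_ab q w a b (sigk q w (2 * n + 1) a)).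
  { intros n; left; left; exists n; reflexivity. }
  assert (Pb : forall n, in_qw_ab q w a b (sigk q w (2 * n + 1) b)).
  { intros n; right; left; exists n; reflexivity. }
  assert (HT : forall x, (forall n, in_qw_ab q w a b (sigk q w (2 * n + 1) x)) ->
    hterms q w (fun t =>
        Derive (fun u => L t u (hahnD I q w y t)) (y (sig q w t)) * eta (sig q w t)
      + Derive (fun v => L t (y (sig q w t)) v) (hahnD I q w y t) * hahnD I q w eta t) x
    = hterms q w D x).
  { intros x Px. apply functional_extensionality. intros n. unfold hterms. f_equal.
    symmetry. apply is_derive_unique. apply chain_L. apply HL, Px. }
  assert (HH : hint q w (fun t =>
        Derive (fun u => L t u (hahnD I q w y t)) (y (sig q w t)) * eta (sig q w t)
      + Derive (fun v => L t (y (sig q w t)) v) (hahnD I q w y t) * hahnD I q w eta t)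
      a b = hint q w D a b).
  { unfold hint, hint0. rewrite (HT a Pa), (HT b Pb). reflexivity. }
  rewrite HH. clear HH HT.
  destruct Yy as [Dy _]. destruct Ye as [De _].
  apply is_derive_ext with (fun e => hint q w (fun t => g t e) a b).
  { intros e. unfold calL. f_equal. apply functional_extensionality. intros t.
    unfold g. rewrite (hahnD_lin I q w a b y eta HI H0 Ha Hb Hab Dy De). reflexivity. }
  apply is_derive_Reals. intros eps Heps.
  set (ca := siginv q w a - sig q w a). set (cb := siginv q w b - sig q w b).
  set (M := Rabs ca + Rabs cb + 1).
  assert (HM : 0 < M) by (unfold M; pose proof (Rabs_pos ca); pose proof (Rabs_pos cb); lra).
  assert (He' : 0 < eps / M) by (apply Rdiv_lt_0_compat; lra).
  assert (Ex : forall x, (forall n, in_qw_ab q w a b (sigk q w (2 * n + 1) x)) ->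
     (forall e, Rabs e < dE -> ex_series (hterms q w (fun t => g t e) x)) ->
     ex_series (hterms q w D x) ->
     exists delta, 0 < delta /\ forall e, 0 < Rabs e < delta ->
    Rabs ((Series (hterms q w (fun t => g t e) x) - Series (hterms q w (fun t => g t 0) x)) / e
          - Series (hterms q w D x)) < eps / M).
  { intros x Px Ex1 Ex2. apply (series_der q w (in_qw_ab q w a b) g D x Hq Px HU); auto.
    exists dE; split; auto. }
  destruct (Ex a Pa (fun e He => proj1 (HE e He)) HDa) as [da [Hda Ka]].
  destruct (Ex b Pb (fun e He => proj2 (HE e He)) HDb) as [db [Hdb Kb]].
  assert (Hd : 0 < Rmin da db) by (apply Rmin_pos; lra).
  exists (mkposreal _ Hd). simpl. intros h hn hd.
  assert (Hh : 0 < Rabs h) by (apply Rabs_pos_lt; exact hn).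
  specialize (Ka h (conj Hh (Rlt_le_trans _ _ _ hd (Rmin_l _ _)))).
  specialize (Kb h (conj Hh (Rlt_le_trans _ _ _ hd (Rmin_r _ _)))).
  unfold hint, hint0. fold ca cb.
  replace (0 + h) with h by ring.
  set (Sa := Series (hterms q w (fun t => g t h) a)) in *.
  set (Sb := Series (hterms q w (fun t => g t h) b)) in *.
  set (Sa0 := Series (hterms q w (fun t => g t 0) a)) in *.
  set (Sb0 := Series (hterms q w (fun t => g t 0) b)) in *.
  set (SDa := Series (hterms q w D a)) in *.
  set (SDb := Series (hterms q w D b)) in *.
  replace ((cb * Sb - ca * Sa - (cb * Sb0 - ca * Sa0)) / h - (cb * SDb - ca * SDa))
    with (cb * ((Sb - Sb0) / h - SDb) - ca * ((Sa - Sa0) / h - SDa)) by (field; exact hn).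
  eapply Rle_lt_trans. apply Rabs_triang. rewrite Rabs_Ropp, !Rabs_mult.
  assert (Rabs cb * Rabs ((Sb - Sb0) / h - SDb) <= Rabs cb * (eps / M))
    by (apply Rmult_le_compat_l; [apply Rabs_pos| lra]).
  assert (Rabs ca * Rabs ((Sa - Sa0) / h - SDa) <= Rabs ca * (eps / M))
    by (apply Rmult_le_compat_l; [apply Rabs_pos| lra]).
  assert (Rabs cb * (eps / M) + Rabs ca * (eps / M) < eps).
  { replace (Rabs cb * (eps / M) + Rabs ca * (eps / M)) with (eps - eps / M)
      by (unfold M; field; pose proof (Rabs_pos ca); pose proof (Rabs_pos cb); lra). lra. }
  lra.
Qed.
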